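(* Let $K$ be a finite field of characteristic $p$ and order $q$, let $s$ be a positive integer with $\gcd(s,q-1)=1$, and let $w\in K$. Then: (i) $Q^{(1,-1)}_{1,w}=Q^{(1,-1)}_{1,-w}$; (ii) if $p$ is odd, then $Q^{(1,-1)}_{1,1}-1=Q^{(1,-1)}_{1,-1}-1=Q^{(1,1)}_{1,-1}$; (iii) if $p$ is odd and $w=2^{1/s-1}$, then $Q^{(1,1)}_{1,w}$ is odd; otherwise $Q^{(1,1)}_{1,w}$ is even.
   Context: Let $1/s$ denote the inverse of $s$ modulo $q-1$, so $x\mapsto x^{1/s}$ is the inverse permutation of $x\mapsto x^s$ on $K$. For $t=(t_1,t_2)\in K^2$ and $a,b\in K$, $Q^t_{a,b}$ denotes the number of $(v_1,v_2)\in K^2$ with $t_1v_1+t_2v_2=a$ and $(v_1^s+v_2^s)^{1/s}=b$. *)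

(* Defs.v *)
From HB Require Import structures.
From mathcomp Require Import all_boot all_order all_algebra.
Set Implicit Arguments. Unset Strict Implicit. Unset Printing Implicit Defensive.
Import GRing.Theory.
Local Open Scope ring_scope.

(* q = #|K|. The exponent 1/s : the inverse of s modulo q-1, chosen in
   {1, ..., q-1} (so that x^(1/s) also maps 0 to 0). *)
Definition inv_exp (K : finFieldType) (s : nat) : nat :=
  let q := #|K| in
  odflt 1%N (omap (@nat_of_ord q)
    [pick t : 'I_q | (0 < t)%N && (s * t == 1 %[mod q.-1])%N]).

Definition rootS (K : finFieldType) (s : nat) (x : K) : K := x ^+ inv_exp K s.

Definition Qcount (K : finFieldType) (s : nat) (t : K * K) (a b : K) : nat :=
  #|[set v : K * K | (t.1 * v.1 + t.2 * v.2 == a)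
                     && (rootS s (v.1 ^+ s + v.2 ^+ s) == b)]|.

(* Main.v *)
Require Import Defs.
From HB Require Import structures.
From mathcomp Require Import all_boot all_order all_algebra.
From mathcomp Require Import finfield.
From mathcomp Require Import ring zify.
Import GRing.Theory.
Local Open Scope ring_scope.

Section Aux.
Variable K : finFieldType.
Variable s : nat.
Hypothesis s_gt0 : (0 < s)%N.
Hypothesis cop : coprime s #|K|.-1.

Lemma powk (k : nat) (x : K) : x ^+ (1 + k * #|K|.-1) = x.
Proof.
have hq : (1 < #|K|)%N by apply: card_finNzRing_gt1.
elim: k => [|k IH]; first by rewrite mul0n addn0 expr1.
have -> : (1 + k.+1 * #|K|.-1 = k * #|K|.-1 + #|K|)%N.
  by rewrite mulSn; rewrite -{3}(prednK (ltnW hq)); lia.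
by rewrite exprD expf_card -exprSr -addn1 addnC IH.
Qed.

Lemma inv_exp_spec : (0 < inv_exp K s)%N /\
  (s * inv_exp K s == 1 %[mod #|K|.-1])%N.
Proof.
rewrite /inv_exp; case: pickP => [t /andP[t0 ht] | hn] /=; first by split.
exfalso.
have hq1 : (0 < #|K|.-1)%N.
  by have := card_finNzRing_gt1 K; case: #|K| => [|[|n]].
case: (egcdnP #|K|.-1 s_gt0) => km kn hk _.
move: hk; rewrite (eqP cop) => hk.
set t := (if (km %% #|K|.-1 == 0)%N then #|K|.-1 else km %% #|K|.-1)%N.
have tlt : (t < #|K|)%N.
  rewrite /t; case: ifP => _.
    by have := card_finNzRing_gt1 K; lia.
  by apply: (leq_trans (ltn_pmod _ hq1)); rewrite leq_pred.
have := hn (Ordinal tlt); rewrite /= => /negP; apply.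
apply/andP; split.
  rewrite /t; case: ifP => // /negbT; by rewrite lt0n.
have e1 : (s * t == s * km %[mod #|K|.-1])%N.
  rewrite /t; case: ifP => [/eqP h|_].
    by rewrite modnMl -(modnMmr s km) h muln0 mod0n.
  by rewrite modnMmr.
rewrite (eqP e1) mulnC hk.
by rewrite modnMDl.
Qed.

Lemma powK1 (x : K) : (x ^+ s) ^+ inv_exp K s = x.
Proof.
have [h0 h1] := inv_exp_spec.
rewrite -exprM; rewrite eqn_mod_dvd in h1; last by rewrite muln_gt0 s_gt0.
case/dvdnP: h1 => k hk.
have -> : (s * inv_exp K s = 1 + k * #|K|.-1)%N.
  by rewrite -hk subnKC // muln_gt0 s_gt0.
exact: powk.
Qed.

Lemma powK2 (x : K) : (x ^+ inv_exp K s) ^+ s = x.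
Proof. by rewrite -exprM mulnC exprM powK1. Qed.

Lemma rootSE (x w : K) : (rootS s x == w) = (x == w ^+ s).
Proof.
rewrite /rootS; apply/eqP/eqP => [<-|->]; first by rewrite powK2.
by rewrite powK1.
Qed.

Lemma neg1s : (-1 : K) ^+ s = -1.
Proof.
rewrite -signr_odd; case: (boolP (odd s)) => //= hs.
rewrite expr0.
have := powK1 (-1); rewrite -signr_odd (negbTE hs) expr0 expr1n.
by [].
Qed.

Lemma negs (x : K) : (- x) ^+ s = - x ^+ s.
Proof. by rewrite exprNn neg1s mulN1r. Qed.


Lemma QcountE t a b : Qcount s t a b =
  #|[set v : K * K | (t.1 * v.1 + t.2 * v.2 == a) && (v.1 ^+ s + v.2 ^+ s == b ^+ s)]|.
Proof. by apply: eq_card => v; rewrite !inE rootSE. Qed.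

End Aux.

Lemma card_bij (T : finType) (f : T -> T) (P Q : pred T) :
  injective f -> (forall v, P (f v) = Q v) ->
  #|[set v | P v]| = #|[set v | Q v]|.
Proof.
move=> fi h; rewrite -(card_preimset _ fi); apply: eq_card => v.
by rewrite !inE h.
Qed.

Lemma diff_eq (K : fieldType) (c x y u z : K) : c != 0 -> x - y = c * (u - z) -> (x == y) = (u == z).
Proof. by move=> c0 h; rewrite -subr_eq0 h mulf_eq0 (negbTE c0) subr_eq0. Qed.

Lemma inv_parity (T : finType) (f : T -> T) (P : pred T) :
  involutive f -> (forall x, P (f x) = P x) ->
  odd #|[set x | P x]| = odd #|[set x | P x && (f x == x)]|.
Proof.
move=> finv hP.
set r := @enum_rank T.
have := cardsID [set x | f x == x] [set x | P x].
have -> : [set x | P x] :&: [set x | f x == x] = [set x | P x && (f x == x)].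
  by apply/setP => x; rewrite !inE.
move=> <-.
have := cardsID [set x | r x < r (f x)]%N ([set x | P x] :\: [set x | f x == x]).
move=> <-.
have -> : #|[set x | P x] :\: [set x | f x == x] :\: [set x | (r x < r (f x))%N]| =
          #|([set x | P x] :\: [set x | f x == x]) :&: [set x | (r x < r (f x))%N]|.
  rewrite -(card_preimset _ (can_inj finv)); apply: eq_card => x.
  rewrite !inE finv hP.
  case: (P x); rewrite /= ?andbF ?andbT //.
  rewrite [f x == x]eq_sym.
  case: (eqVneq x (f x)) => [<-|ne]; rewrite /= ?andbF ?andbT //.
  case: ltngtP => // h.
  by move: ne; rewrite (enum_rank_inj (val_inj h)) eqxx.
by rewrite addnn oddD odd_double addbF.
Qed.

Theorem lemma4p8 (K : finFieldType) (p : nat) (s : nat) (w : K) :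
  p \in [pchar K] -> (0 < s)%N -> coprime s #|K|.-1 ->
  [/\ Qcount s (1 : K, -1 : K) 1 w = Qcount s (1 : K, -1 : K) 1 (- w),
      odd p ->
        ((Qcount s (1 : K, -1 : K) 1 1)%:Z - 1 = (Qcount s (1 : K, -1 : K) 1 (-1))%:Z - 1)%R
        /\ ((Qcount s (1 : K, -1 : K) 1 (-1))%:Z - 1 = (Qcount s (1 : K, 1 : K) 1 (-1))%:Z)%R
    & odd (Qcount s (1 : K, 1 : K) 1 w) = odd p && (w == rootS s 2 / 2)].
Proof.
move=> hp s0 cop.
have hpr : prime p := pcharf_prime hp.
have part1 : forall w : K, Qcount s (1 : K, -1 : K) 1 w = Qcount s (1 : K, -1 : K) 1 (- w).
  move=> u; rewrite !QcountE //.
  apply: (@card_bij _ (fun v => (- v.2, - v.1))).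
    by apply: (@can_inj _ _ _ (fun v => (- v.2, - v.1))) => [[a b]] /=; rewrite !opprK.
  move=> [a b] /=.
  rewrite !negs // !mul1r !mulN1r opprK [- b + a]addrC.
  congr (_ && _).
  by rewrite -opprD eqr_oppLR addrC.
split => //.
  move=> hodd.
  have h2 : (2%:R : K) != 0.
    rewrite -(dvdn_pcharf hp); apply/negP => d.
    have := dvdn_leq (isT : (0 < 2)%N) d; have := prime_gt1 hpr.
    case: p hodd {hp hpr d} => [|[|[|n]]] //=.
  have hn1 : (-1 : K) != 1.
    apply: contra h2 => /eqP h.
    apply/eqP; have -> : (2%:R : K) = 1 - (-1) by ring.
    by rewrite h subrr.
  split; first by rewrite (part1 1).
  suff -> : Qcount s (1 : K, -1 : K) 1 (-1) = (Qcount s (1 : K, 1 : K) 1 (-1)).+1.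
    by rewrite -addn1 PoszD addrK.
  rewrite !QcountE //.
  rewrite neg1s //=.
  pose psi := fun v : K * K => if v.1 == 0 then v else (v.1^-1, v.2 / v.1).
  have psiK : involutive psi.
    move=> [a b]; rewrite /psi /=; case: (eqVneq a 0) => [->|a0]; rewrite ?eqxx //=.
    by rewrite invr_eq0 (negbTE a0) /= invrK divfK.
  rewrite -(card_preimset _ (can_inj psiK)).
  have -> : psi @^-1: [set v | (1 * v.1 + -1 * v.2 == 1) && (v.1 ^+ s + v.2 ^+ s == -1)]
      = (0, -1) |: [set v | (1 * v.1 + 1 * v.2 == 1) && (v.1 ^+ s + v.2 ^+ s == -1)].
    apply/setP => [[a b]]; rewrite !inE /psi /=.
    case: (eqVneq a 0) => [->|a0] /=.
      have z0 : (0:K) ^+ s = 0 by rewrite expr0n gtn_eqF.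
      rewrite z0 !mul1r mulN1r !add0r xpair_eqE eqxx /= eqr_oppLR.
      case: (eqVneq b (-1)) => [->|hb].
      by rewrite /= neg1s // eqxx.
      rewrite /=.
      case: (eqVneq b 1) => [->|//].
      by rewrite expr1n eq_sym (negbTE hn1).
    rewrite xpair_eqE (negbTE a0) /=.
    have e1 : (1 / a + -1 * (b / a) == 1) = (1 * a + 1 * b == 1).
      rewrite -(inj_eq (mulIf a0)) /=.
      apply: (@diff_eq _ (-1)); first by rewrite oppr_eq0 oner_eq0.
      by field.
    have e2 : (a^-1 ^+ s + (b / a) ^+ s == -1) = (a ^+ s + b ^+ s == -1).
      have as0 : a ^+ s != 0 by rewrite expf_neq0.
      rewrite -(inj_eq (mulIf as0)) /= mulrDl -!exprMn mulVf // divfK // expr1n.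
      apply: (@diff_eq _ 1); first by rewrite oner_eq0.
      by ring.
    by rewrite e1 e2.
  by rewrite cardsU1 inE /= !mul1r add0r (negbTE hn1) /= add1n.
rewrite QcountE //.
pose P := fun x : K => x ^+ s + (1 - x) ^+ s == w ^+ s.
have ginj : injective (fun x : K => (x, 1 - x)).
  by move=> x y [].
have -> : #|[set v : K * K | ((1 : K, 1 : K).1 * v.1 + (1 : K, 1 : K).2 * v.2 == 1)
             && (v.1 ^+ s + v.2 ^+ s == w ^+ s)]| = #|[set x | P x]|.
  rewrite -(card_imset [set x | P x] ginj).
  apply: eq_card => [[a b]]; rewrite inE /=.
  apply/idP/imsetP.
    move=> /andP[/eqP hab hP]; move: hab; rewrite !mul1r => hab.
    have hb : b = 1 - a by rewrite -hab; ring.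
    by exists a; [rewrite inE /P -hb | rewrite hb].
  case=> x; rewrite inE => hx [-> ->].
  by rewrite !mul1r addrC subrK eqxx.
have finv : involutive (fun x : K => 1 - x).
  by move=> x; rewrite opprB addrC subrK.
rewrite (@inv_parity _ (fun x : K => 1 - x) P finv); last first.
  by move=> x; rewrite /P finv addrC.
have [hp2|hodd] := even_prime hpr.
  subst p.
  have h20 : (2%:R : K) = 0 by have := dvdn_pcharf hp 2; rewrite dvdnn => /esym/eqP.
  have -> : [set x | P x && (1 - x == x)] = set0.
    apply/setP => x; rewrite !inE.
    have -> : (1 - x == x) = (1 == 0 :> K).
      apply: (@diff_eq _ 1); first by rewrite oner_eq0.
      have -> : 1 - x - x = 1 - x * 2%:R by ring.
      by rewrite h20 mulr0 !subr0 mul1r.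
    by rewrite oner_eq0 andbF.
  by rewrite cards0.
have h2 : (2%:R : K) != 0.
  rewrite -(dvdn_pcharf hp); apply/negP => d.
  have := dvdn_leq (isT : (0 < 2)%N) d; have := prime_gt1 hpr.
  case: p hodd {hp hpr d} => [|[|[|n]]] //=.
have e : forall x : K, (1 - x == x) = (x == 2%:R^-1).
  move=> x; apply: (@diff_eq _ (- 2%:R)); first by rewrite oppr_eq0.
  by field.
have hP : P 2%:R^-1 = (w == rootS s 2 / 2).
  have key : forall y : K, (w == y) = (w ^+ s == y ^+ s).
    move=> y; apply/eqP/eqP => [->|h] //.
    by rewrite -(@powK1 K s s0 cop w) h powK1.
  rewrite /P key [RHS]eq_sym.
  rewrite expr_div_n /rootS powK2 //.
  have -> : 1 - (2%:R : K)^-1 = 2%:R^-1 by field.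
  rewrite exprVn.
  have -> : (2 : K) = 2%:R by [].
  congr (_ == _).
  by field; rewrite expf_neq0.
rewrite hodd /=.
case hh : (P 2%:R^-1).
  have -> : [set x | P x && (1 - x == x)] = [set 2%:R^-1].
    apply/setP => x; rewrite !inE e.
    by case: eqVneq => [->|]; rewrite ?hh ?andbF.
  by rewrite cards1 -hP hh.
have -> : [set x | P x && (1 - x == x)] = set0.
  apply/setP => x; rewrite !inE e.
  by case: eqVneq => [->|]; rewrite ?hh ?andbF.
by rewrite cards0 -hP hh.
Qed.
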